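(* Let $n \ge 1$ and $k \in \{1, \ldots, n\}$. Let red tanks $R_1, \ldots, R_n$ each initially contain $1$ unit of water and blue tanks $B_1, \ldots, B_n$ each initially contain $0$. Run the moving window strategy: for $i = 1, \ldots, n-k+1$ (in order), for $j = i, \ldots, i+k-1$ (in order), equilibrate $R_i$ and $B_j$. Then for each $i \in \{1, \ldots, n-k+1\}$ and $j \in \{i, \ldots, i+k-1\}$, immediately after the equilibration of $R_i$ and $B_j$, both $R_i$ and $B_j$ contain at most \[ \frac{k + i - j}{k+1} \] units of water.
   Context: Equilibrating two tanks $a \neq b$ with water levels $x_a, x_b$ replaces both levels by $\frac{x_a+x_b}{2}$ and leaves all other tanks unchanged. *)

(* Defs.v *)
From HB Require Import structures.
From mathcomp Require Import all_boot all_order all_algebra.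
Set Implicit Arguments. Unset Strict Implicit. Unset Printing Implicit Defensive.
Import Order.TTheory GRing.Theory Num.Theory.
Local Open Scope ring_scope.

Definition tank := (bool * nat)%type.
Definition red (i : nat) : tank := (true, i).
Definition blue (j : nat) : tank := (false, j).

Definition config (R : realFieldType) := tank -> R.

Definition equilibrate (R : realFieldType) (s : config R) (a b : tank) : config R :=
  fun t => if (t == a) || (t == b) then (s a + s b) / 2%:R else s t.

(* Initial configuration: R_1..R_n contain 1, B_1..B_n contain 0
   (tanks outside these ranges are never used; they are set to 0). *)
Definition init_config (R : realFieldType) (n : nat) : config R :=
  fun t => if t.1 && (1 <= t.2 <= n)%N then 1 else 0.

Definition window_steps (n k : nat) : seq (nat * nat) :=
  flatten [seq [seq (i, j) | j <- iota i k] | i <- iota 1 (n - k + 1)].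

Definition apply_step (R : realFieldType) (s : config R) (p : nat * nat) : config R :=
  equilibrate s (red p.1) (blue p.2).

Definition config_after (R : realFieldType) (n k i j : nat) : config R :=
  foldl (@apply_step R) (init_config R n)
        (take (index (i, j) (window_steps n k)).+1 (window_steps n k)).

(* Main.v *)
Require Import Defs.
From HB Require Import structures.
From mathcomp Require Import all_boot all_order all_algebra.
From mathcomp Require Import zify ring lra.
Import Order.TTheory GRing.Theory Num.Theory.
Local Open Scope ring_scope.
Set Implicit Arguments. Unset Strict Implicit.

Section Aux.
Variable R : realFieldType.
Variables n k : nat.

Let c : R := (k.+1)%:R.

Lemma eq_a (s : config R) a b : equilibrate s a b a = (s a + s b) / 2%:R.
Proof. by rewrite /equilibrate eqxx. Qed.
Lemma eq_b (s : config R) a b : equilibrate s a b b = (s a + s b) / 2%:R.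
Proof. by rewrite /equilibrate eqxx orbT. Qed.
Lemma eq_o (s : config R) a b t : t != a -> t != b -> equilibrate s a b t = s t.
Proof. by rewrite /equilibrate => /negbTE -> /negbTE ->. Qed.

Lemma avg (x y z : nat) (a b : R) : a <= x%:R / c -> b <= y%:R / c ->
  (x + y = 2 * z)%N -> (a + b) / 2%:R <= z%:R / c.
Proof.
move=> ha hb hxy.
have e : x%:R / c + y%:R / c = 2%:R * (z%:R / c).
  by rewrite -mulrDl -natrD hxy natrM mulrA.
have : a + b <= 2%:R * (z%:R / c) by rewrite -e lerD.
set Z := z%:R / c => h. rewrite ler_pdivrMr ?ltr0n //. lra.
Qed.

Definition bnd (m p : nat) : nat := if (p < m)%N then (k - p)%N else (k.-1 - p)%N.

Definition Inv (i : nat) (s : config R) :=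
  (forall i', (i <= i' <= n)%N -> s (red i') = 1) /\
  (forall p, s (blue (i + p)) <= (k.-1 - p)%:R / c).

Definition WInv (i m : nat) (s : config R) :=
  (forall i', (i < i' <= n)%N -> s (red i') = 1) /\
  s (red i) <= (k.+1 - m)%:R / c /\
  (forall p, s (blue (i + p)) <= (bnd m p)%:R / c).

Lemma cpos : 0 < c. Proof. by rewrite ltr0n. Qed.

Lemma divle (x y : nat) : (x <= y)%N -> x%:R / c <= y%:R / c.
Proof. by move=> h; rewrite ler_pM2r ?invr_gt0 ?cpos // ler_nat. Qed.

Lemma wstep i m s : (m < k)%N -> WInv i m s ->
  WInv i m.+1 (apply_step s (i, i + m)) /\
  (apply_step s (i, i + m)) (red i) <= (k - m)%:R / c /\
  (apply_step s (i, i + m)) (blue (i + m)) <= (k - m)%:R / c.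
Proof.
move=> hm [hr [hri hb]].
have hv : (s (red i) + s (blue (i + m))) / 2%:R <= (k - m)%:R / c.
  have := avg (z := (k - m)%N) hri (hb m); rewrite /bnd ltnn; apply; lia.
rewrite /apply_step /= eq_a eq_b; split; last by split.
split.
- move=> i' hi'; rewrite eq_o; first by apply: hr.
  + by apply/eqP => -[]; lia.
  + by [].
- split; first by rewrite eq_a; apply: (le_trans hv); apply: divle; lia.
  move=> p; case: (eqVneq p m) => [->|hpm].
    by rewrite eq_b; apply: (le_trans hv); apply: divle; rewrite /bnd ltnSn.
  rewrite eq_o; [|by []|by apply/eqP => -[]; lia].
  apply: (le_trans (hb p)); apply: divle; rewrite /bnd.
  case: ifP; case: ifP; lia.
Qed.

Lemma wrun i l m s : (m + l <= k)%N -> WInv i m s ->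
  WInv i (m + l) (foldl (@apply_step R) s [seq (i, j) | j <- iota (i + m) l]).
Proof.
elim: l m s => [|l IH] m s hml hw /=; first by rewrite addn0.
have hmk : (m < k)%N by lia.
have [hw' _] := wstep hmk hw.
have -> : (m + l.+1 = m.+1 + l)%N by lia.
have -> : (i + m).+1 = (i + m.+1)%N by lia.
by apply: IH => //; lia.
Qed.

Lemma inv_winv i s : (i <= n)%N -> Inv i s -> WInv i 0 s.
Proof.
move=> hin [hr hb]; split; first by move=> i' h; apply: hr; lia.
split; last by move=> p; rewrite /bnd ltn0.
rewrite hr ?leqnn ?hin // subn0 divff // pnatr_eq0. 
 by [].
Qed.

Lemma winv_inv i s : WInv i k s -> Inv i.+1 s.
Proof.
move=> [hr [_ hb]]; split; first by move=> i' h; apply: hr; lia.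
move=> q; have -> : (i.+1 + q = i + q.+1)%N by lia. apply: (le_trans (hb q.+1)); apply: divle.
rewrite /bnd; case: ifP; lia.
Qed.

Definition window (i : nat) : seq (nat * nat) := [seq (i, j) | j <- iota i k].

Lemma prefix_inv t : (t <= n - k)%N ->
  Inv t.+1 (foldl (@apply_step R) (init_config R n) (flatten (map window (iota 1 t)))).
Proof.
elim: t => [|t IH] ht.
  split=> [i' hi'|p]; first by rewrite /init_config /=; case: ifP => //; lia.
  rewrite /init_config /= mulr_ge0 ?invr_ge0 ?ler0n //.
have -> : iota 1 t.+1 = iota 1 t ++ [:: t.+1].
  by have e := iotaD 1 t 1; rewrite addn1 add1n in e; exact e.
rewrite map_cat flatten_cat foldl_cat /= cats0.
apply: winv_inv; have ht' : (t <= n - k)%N by lia.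
have htn : (t.+1 <= n)%N by lia.
have h0k : (0 + k <= k)%N by [].
have := wrun h0k (inv_winv htn (IH ht')); rewrite add0n addn0; exact.
Qed.

End Aux.

Theorem mainTheorem5 (R : realFieldType) (n k : nat)
  (hn : (1 <= n)%N) (hk1 : (1 <= k)%N) (hkn : (k <= n)%N)
  (i j : nat) (hi1 : (1 <= i)%N) (hi2 : (i <= n - k + 1)%N)
  (hj1 : (i <= j)%N) (hj2 : (j <= i + k - 1)%N) :
  config_after R n k i j (red i) <= ((k + i)%:R - j%:R) / (k.+1)%:R /\
  config_after R n k i j (blue j) <= ((k + i)%:R - j%:R) / (k.+1)%:R.
Proof.
have [t ei] : exists t, i = t.+1 by exists i.-1; lia.
have [m ej] : exists m, j = (i + m)%N by exists (j - i)%N; lia.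
have [l ek] : exists l, k = (m + (1 + l))%N by exists (k - m.+1)%N; lia.
have [r er] : exists r, (n - k + 1 = t + (1 + r))%N by exists (n - k - t)%N; lia.
have ews : window_steps n k =
   (flatten (map (window k) (iota 1 t)) ++ [seq (i, j') | j' <- iota i m]) ++
   (i, j) :: ([seq (i, j') | j' <- iota (i + m).+1 l] ++
              flatten (map (window k) (iota (i.+1) r))).
  rewrite /window_steps.
  rewrite er.
  rewrite iotaD map_cat flatten_cat -catA; congr (_ ++ _).
  have -> : iota (1 + t) (1 + r) = i :: iota i.+1 r by rewrite add1n -ei.
  have hw : [seq (i, j0) | j0 <- iota i k] = [seq (i, j') | j' <- iota i m] ++
      (i, j) :: [seq (i, j') | j' <- iota (i + m).+1 l].
    by rewrite {1}ek iotaD map_cat add1n /= -ej.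
  by rewrite /= hw -catA.
have hnot : (i, j) \notin flatten (map (window k) (iota 1 t)) ++
                          [seq (i, j') | j' <- iota i m].
  rewrite mem_cat negb_or; apply/andP; split.
    apply/flatten_mapP => -[x]; rewrite mem_iota => hx /mapP [y _ [hxy _]]; lia.
  by apply/mapP => -[y]; rewrite mem_iota => hy /(congr1 snd) /= hyj; lia.
rewrite /config_after ews (index_pivot _ hnot) -cat_rcons take_size_cat ?size_rcons //.
rewrite -cats1 foldl_cat /= foldl_cat.
have h0 : @Inv R n k i (foldl (@apply_step R) (init_config R n)
       (flatten [seq window k i | i <- iota 1 t])) by rewrite ei; apply: prefix_inv; lia.
have hm0 : (0 + m <= k)%N by lia.
have hin : (i <= n)%N by lia.
have := wrun hm0 (inv_winv hin h0).
rewrite add0n addn0 => hw.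
have hmk : (m < k)%N by lia.
have [_ [h1 h2]] := wstep hmk hw.
have -> : ((k + i)%:R - j%:R : R) = (k - m)%:R by rewrite -natrB; [congr (_%:R); lia | lia].
by rewrite ej; split.
Qed.
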